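(* Let $(P,\mathit{dist})$ be a finite metric space with $N=|P|\ge 2$ and doubling dimension $d$. Then the output of Algorithm $\mathrm{ClosestPair}(P,N,d)$ (for any outcome of its random choices) equals the closest-pair distance $\min\{\mathit{dist}(x,y):x,y\in P,\ x\ne y\}$ of $P$.
   Context: For $X\subseteq P$, $p\in P$ and reals $R'\ge R\ge 0$: $\mathit{ball}_X(p,R)=\{x\in X:\mathit{dist}(p,x)\le R\}$ and $\mathit{annulus}_X(p,R,R')=\{x\in X: R<\mathit{dist}(p,x)\le R'\}$. For $X\subseteq P$ with $|X|\ge2$, $\delta(X)=\min\{\mathit{dist}(x,y):x,y\in X,x\ne y\}$. The doubling dimension of $(P,\mathit{dist})$ is $\log_2\lambda$, where $\lambda$ is the smallest integer such that for every $p\in P$ and real $R>0$, $\mathit{ball}_P(p,R)$ is covered by at most $\lambda$ balls $\mathit{ball}_P(q,R/2)$ with $q\in P$; throughout, $d$ denotes the doubling dimension of the whole space $P$. Algorithm $\mathrm{SepAnn}(S,n,d,\mu,c)$: repeat: choose $p$ uniformly at random from $S$; let $R_p=\min\{r>0:|\mathit{ball}_S(p,r)|\ge n/c\}$; until $|\mathit{ball}_S(p,\mu R_p)|\le n/2$; return $p$ and $R'=R_p$. Algorithm $\mathrm{SparseSepAnn}(S,n,d,t)$: set $c=2(4e)^d$; let $(p,R')$ be the output of $\mathrm{SepAnn}(S,n,d,e,c)$; let $R_i=(1+1/t)^iR'$ ($0\le i\le t$) and $A_i=\mathit{annulus}_S(p,R_{i-1},R_i)$ ($1\le i\le t$); repeat: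 choose $i$ uniformly at random from $\{1,\dots,t\}$; until $|A_i|\le n/t$; return $p$ and $R=R_{i-1}$. Algorithm $\mathrm{ClosestPair}(S,n,d)$ (for $S\subseteq P$, $n=|S|\ge2$): if $n<2(16e)^d$, compute $\delta_0=\delta(S)$ by brute force. Otherwise: set $t=\lfloor \frac{1}{16e}(n/2)^{1/d}\rfloor$; let $(p,R)$ be the output of $\mathrm{SparseSepAnn}(S,n,d,t)$; let $S_1=\mathit{ball}_S(p,R)$, $S_2=\mathit{annulus}_S(p,R,(1+1/t)R)$, $S_3=S\setminus(S_1\cup S_2)$; compute $\delta'=\mathrm{ClosestPair}(S_1\cup S_2,|S_1\cup S_2|,d)$ and $\delta''=\mathrm{ClosestPair}(S_2\cup S_3,|S_2\cup S_3|,d)$; set $\delta_0=\min(\delta',\delta'')$. Return $\delta_0$. *)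

(* Defs.v *)
From HB Require Import structures.
From mathcomp Require Import all_boot all_order all_algebra.
From mathcomp Require Import reals sequences exp.
Set Implicit Arguments. Unset Strict Implicit. Unset Printing Implicit Defensive.
Import Order.TTheory GRing.Theory Num.Theory.
Local Open Scope ring_scope.

Section Defs.
Variables (T : finType) (R : realType) (dist : T -> T -> R).

Definition is_metric : Prop :=
  [/\ forall x y, 0 <= dist x y,
      forall x y, dist x y = 0 <-> x = y,
      forall x y, dist x y = dist y x &
      forall x y z, dist x z <= dist x y + dist y z].

Definition ball (X : {set T}) (p : T) (r : R) : {set T} :=
  [set x in X | dist p x <= r].

Definition annulus (X : {set T}) (p : T) (r r' : R) : {set T} :=
  [set x in X | (r < dist p x) && (dist p x <= r')].

Definition doubling_cover (lam : nat) : Prop :=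
  forall (p : T) (r : R), 0 < r ->
    exists Q : {set T}, (#|Q| <= lam)%N /\
      ball [set: T] p r \subset \bigcup_(q in Q) ball [set: T] q (r / 2).

Definition doubling_constant (lam : nat) : Prop :=
  doubling_cover lam /\ forall l, doubling_cover l -> (lam <= l)%N.

Definition doubling_dimension (d : R) : Prop :=
  exists lam, doubling_constant lam /\ d = ln (lam%:R) / ln 2.

Definition is_min_dist (X : {set T}) (v : R) : Prop :=
  (exists x y, [/\ x \in X, y \in X, x != y & v = dist x y]) /\
  (forall x y, x \in X -> y \in X -> x != y -> v <= dist x y).

Definition is_Rp (S : {set T}) (n : nat) (c : R) (p : T) (r : R) : Prop :=
  [/\ 0 < r, (n%:R / c : R) <= #|ball S p r|%:R &
      forall r', 0 < r' -> (n%:R / c : R) <= #|ball S p r'|%:R -> r <= r'].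

Definition SepAnn_out (S : {set T}) (n : nat) (mu c : R) (p : T) (R' : R) : Prop :=
  [/\ p \in S, is_Rp S n c p R' & #|ball S p (mu * R')|%:R <= (n%:R / 2 : R)].

Definition SparseSepAnn_out (S : {set T}) (n : nat) (d : R) (t : nat)
    (p : T) (Rr : R) : Prop :=
  exists R' : R,
    SepAnn_out S n (expR 1) (2 * powR (4 * expR 1) d) p R' /\
    let Ri := fun i : nat => (1 + t%:R^-1) ^+ i * R' in
    exists i : nat, [/\ (1 <= i <= t)%N,
      #|annulus S p (Ri i.-1) (Ri i)|%:R <= (n%:R / t%:R : R) & Rr = Ri i.-1].

Definition CP_small (d : R) (n : nat) : bool :=
  (n%:R : R) < 2 * powR (16 * expR 1) d.

Definition CP_t (d : R) (n : nat) : nat :=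
  Num.truncn ((16 * expR 1)^-1 * powR (n%:R / 2 : R) d^-1).

(* CP_out d S n v : v is a possible output of ClosestPair(S,n,d),
   for some outcome of the random choices *)
Inductive CP_out (d : R) : {set T} -> nat -> R -> Prop :=
| CP_base S n v :
    CP_small d n -> is_min_dist S v -> CP_out d S n v
| CP_rec S n p Rr v1 v2 :
    ~~ CP_small d n ->
    SparseSepAnn_out S n d (CP_t d n) p Rr ->
    let S1 := ball S p Rr in
    let S2 := annulus S p Rr ((1 + (CP_t d n)%:R^-1) * Rr) in
    let S3 := S :\: (S1 :|: S2) in
    CP_out d (S1 :|: S2) #|S1 :|: S2| v1 ->
    CP_out d (S2 :|: S3) #|S2 :|: S3| v2 ->
    CP_out d S n (Num.min v1 v2).

End Defs.

(* Main.v *)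
Require Import Defs.
From HB Require Import structures.
From mathcomp Require Import all_boot all_order all_algebra.
From mathcomp Require Import reals sequences exp.
From mathcomp Require Import ring lra zify.
Import Order.TTheory GRing.Theory Num.Theory.
Local Open Scope ring_scope.

Section S.
Variables (T : finType) (R : realType) (dist : T -> T -> R).
Hypothesis hm : is_metric dist.
Variable lam : nat.
Hypothesis hcov : doubling_cover dist lam.

Lemma cover_seq r (r0 : 0 < r) (s : seq T) : exists Q : {set T},
  (#|Q| <= lam * size s)%N /\ forall x, (exists2 q, q \in s & dist q x <= r) ->
    exists2 q, q \in Q & dist q x <= r / 2.
Proof.
elim: s => [|a s [Q [HQ1 HQ2]]].
  by exists set0; split; [rewrite cards0 | move=> x [q]].
have [Qa [Ha1 Ha2]] := hcov a r r0.
exists (Qa :|: Q); split.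
  rewrite /= mulnS; apply: leq_trans (leq_add Ha1 HQ1).
  by rewrite cardsU leq_subr.
move=> x [q]; rewrite inE => /orP [/eqP -> hx|qs hx].
  have : x \in ball dist [set: T] a r by rewrite inE in_setT hx.
  move/(subsetP Ha2)/bigcupP => [q' q'Q]; rewrite inE => /andP [_ h].
  by exists q'; rewrite // inE q'Q.
have [q' q'Q h] := HQ2 x (ex_intro2 _ _ q qs hx).
by exists q'; rewrite // inE q'Q orbT.
Qed.

Lemma cover_k k p r : 0 < r -> exists Q : {set T},
  (#|Q| <= lam ^ k)%N /\ forall x, dist p x <= r ->
    exists2 q, q \in Q & dist q x <= r / 2 ^+ k.
Proof.
move=> r0; elim: k => [|k [Q [HQ1 HQ2]]].
  by exists [set p]; split; [rewrite cards1 | move=> x hx; exists p; rewrite ?inE ?expr0 ?divr1].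
have rk0 : 0 < r / 2 ^+ k by rewrite divr_gt0 // exprn_gt0.
have [Q' [H1 H2]] := @cover_seq _ rk0 (enum Q).
exists Q'; split.
  by apply: leq_trans H1 _; rewrite expnS -cardE leq_mul2l HQ1 orbT.
move=> x /HQ2 [q qQ hq]; have qe : q \in enum Q by rewrite mem_enum.
have [q' q'Q h] := H2 x (ex_intro2 _ _ q qe hq).
exists q' => //; suff -> : r / 2 ^+ k.+1 = r / 2 ^+ k / 2 by [].
by rewrite exprS invfM [2^-1 / _]mulrC mulrA.
Qed.

Lemma aux2 (a b c : R) : 2 * (a / b) * c = a * (2 * c) / b.
Proof. ring. Qed.

Lemma count_ball S p Rr (Q : {set T}) rho :
  (forall x, dist p x <= Rr -> exists2 q, q \in Q & dist q x <= rho) ->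
  (forall x y, x \in ball dist S p Rr -> y \in ball dist S p Rr -> x != y ->
     2 * rho < dist x y) ->
  (#|ball dist S p Rr| <= #|Q|)%N.
Proof.
case: hm => d0 deq dsym dtri.
move=> hc hsep.
pose f x := odflt x [pick q in Q | dist q x <= rho].
have fP x : x \in ball dist S p Rr -> (f x \in Q) && (dist (f x) x <= rho).
  rewrite inE => /andP [_ /hc [q qQ hq]].
  rewrite /f; case: pickP => [q' /andP [-> ->] //|/(_ q)].
  by rewrite qQ hq.
rewrite -(card_in_imset (f := f)).
  apply: subset_leq_card; apply/subsetP => y /imsetP [x xB ->].
  by case/andP: (fP x xB).
move=> x y xB yB fxy; apply/eqP; apply/negP => /negP nxy.
have := hsep x y xB yB nxy.
case/andP: (fP x xB) => _ hx; case/andP: (fP y yB) => _ hy.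
rewrite fxy in hx.
move=> h2; have h1 := dtri x (f y) y; rewrite (dsym x (f y)) in h1.
have : dist x y <= 2 * rho by apply: (le_trans h1); lra.
by rewrite leNgt h2.
Qed.

Hypothesis lam0 : (0 < lam)%N.
Variable d : R.
Hypothesis hd : d = ln (lam%:R) / ln 2.

Lemma lam_powR : lam%:R = powR 2 d.
Proof.
rewrite /powR pnatr_eq0 /=.
rewrite hd divfK ?lnK //; first by rewrite posrE ltr0n.
by rewrite gt_eqF // ln_gt0 // ltr1n.
Qed.

Lemma lamX k : lam%:R ^+ k = powR (2 ^+ k) d.
Proof.
rewrite lam_powR -powR_mulrn ?powR_ge0 // -powRrM mulrC powRrM powR_mulrn //.
Qed.

Lemma d_ge0 : 0 <= d.
Proof.
rewrite hd divr_ge0 // ?ln_ge0 ?ler1n //.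
Qed.

Lemma key S n p Rr : SparseSepAnn_out dist S n d (CP_t d n) p Rr ->
  exists x y, [/\ x \in ball dist S p Rr, y \in ball dist S p Rr, x != y &
    dist x y <= Rr / (CP_t d n)%:R].
Proof.
case=> R' [[pS [R'0 hnc hmin] _]] [i [/andP [i1 it] hA {Rr}->]].
set t := CP_t d n in it hA *.
have t1 : (1 <= t)%N by apply: leq_trans it.
set RR := (1 + t%:R^-1) ^+ i.-1 * R'.
have t0 : 0 < t%:R :> R by rewrite ltr0n.
have R'le : R' <= RR.
  have h1 : 1 <= (1 + t%:R^-1) ^+ i.-1 :> R.
    have hx : 1 <= 1 + t%:R^-1 :> R by rewrite lerDl invr_ge0 ltW.
    exact: (exprn_ege1 i.-1 hx).
  rewrite /RR -{1}(mul1r R'); apply: ler_wpM2r => //; exact: ltW.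
have RR0 : 0 < RR by apply: lt_le_trans R'le.
case: (boolP [exists x, [exists y, [&& x \in ball dist S p RR, y \in ball dist S p RR,
   x != y & dist x y <= RR / t%:R]]]).
  move=> /existsP [x /existsP [y /and4P [h1 h2 h3 h4]]].
  by exists x, y; split.
move=> hno; exfalso.
have hsep : forall x y, x \in ball dist S p RR -> y \in ball dist S p RR -> x != y ->
    RR / t%:R < dist x y.
  move=> x y hx hy hxy; rewrite ltNge; apply/negP => hle; move/negP: hno; apply.
  by apply/existsP; exists x; apply/existsP; exists y; rewrite hx hy hxy hle.
pose e := trunc_log 2 (2 * t - 1).
have he1 : (2 ^ e <= 2 * t - 1)%N by apply: trunc_logP => //; lia.
have he2 : (2 * t - 1 < 2 ^ e.+1)%N by apply: trunc_log_ltn.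
have hk1 : (2 * t <= 2 ^ e.+1)%N by lia.
have hk2 : (2 ^ e.+1 < 4 * t)%N by rewrite expnS; lia.
have [Q [HQ1 HQ2]] := @cover_k e.+1 p _ RR0.
have hcard := @count_ball S p RR Q _ HQ2.
have : (#|ball dist S p RR| <= #|Q|)%N.
  apply: hcard => x y hx hy hxy; apply: le_lt_trans (hsep x y hx hy hxy).
  have K0 : 0 < 2 ^+ e.+1 :> R by rewrite exprn_gt0.
  have hK : 2 * t%:R <= 2 ^+ e.+1 :> R.
    by move: hk1; rewrite -(ler_nat R) natrX natrM.
  rewrite ler_pdivlMr // (_ : 2 * (RR / 2 ^+ e.+1) * t%:R = RR * (2 * t%:R) / 2 ^+ e.+1).
    by rewrite ler_pdivrMr // ler_wpM2l // ltW.
  exact: aux2.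
move=> hB.
have hB' : (#|ball dist S p R'| <= lam ^ e.+1)%N.
  apply: leq_trans (leq_trans hB HQ1).
  apply: subset_leq_card; apply/subsetP => x; rewrite !inE => /andP [-> h].
  by apply: le_trans R'le.
have A : n%:R / (2 * powR (4 * expR 1) d) <= lam%:R ^+ e.+1.
  apply: le_trans hnc _; by rewrite -natrX ler_nat.
have e1 : 1 < expR 1 :> R by rewrite expR_gt1.
have C : t%:R <= (16 * expR 1)^-1 * powR (n%:R / 2) d^-1.
  rewrite /t /CP_t truncn_le.
  apply: mulr_ge0; [by rewrite invr_ge0 mulr_ge0 // expR_ge0 | exact: powR_ge0].
have dpos : 0 < d.
  rewrite lt_def d_ge0 andbT; apply/eqP => d0.
  move: C; rewrite d0 invr0 powRr0 mulr1 => C.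
  have : 1 <= (16 * expR 1)^-1 :> R by apply: le_trans C; rewrite ler1n.
  rewrite invf_ge1; last by rewrite mulr_gt0 // expR_gt0.
  move=> h; have h16 : 1 < 16 * expR 1 :> R.
    by apply: (lt_le_trans e1); rewrite ler_peMl ?expR_ge0 // ler1n.
  by move: h; rewrite leNgt h16.
have B : lam%:R ^+ e.+1 < powR (4 * t%:R) d.
  rewrite lamX; apply: gt0_ltr_powR => //; rewrite ?nnegrE ?exprn_ge0 ?mulr_ge0 //.
  by move: hk2; rewrite -(ltr_nat R) natrX natrM.
have D : powR (4 * expR 1) d * powR (4 * t%:R) d = powR (16 * expR 1 * t%:R) d.
  rewrite -powRM ?mulr_ge0 ?expR_ge0 //; congr powR; ring.
have E : powR (16 * expR 1 * t%:R) d <= n%:R / 2.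
  have h16 : 16 * expR 1 * t%:R <= powR (n%:R / 2) d^-1.
    rewrite -ler_pdivlMl ?mulr_gt0 ?expR_gt0 //.
  have := ge0_ler_powR (ltW dpos) _ _ h16.
  rewrite -powRrM mulVf ?gt_eqF // powRr1 ?divr_ge0 //; apply;
    by rewrite nnegrE ?powR_ge0 ?mulr_ge0 ?expR_ge0.
have a0 : 0 < powR (4 * expR 1) d by rewrite powR_gt0 // mulr_gt0 ?expR_gt0.
move: A; rewrite ler_pdivrMr ?mulr_gt0 // => A.
move: A B D E a0; set a := powR _ d; set b := powR _ d; set m := powR _ d.
set L := lam%:R ^+ _; clearbody a b m L; move=> A B D E a0.
have F : L * (2 * a) < b * (2 * a) by rewrite ltr_pM2r ?mulr_gt0.
have G : b * (2 * a) = 2 * m by rewrite -D mulrCA (mulrC b).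
have H : n%:R < 2 * m by rewrite -G; exact: le_lt_trans A F.
move: E; rewrite ler_pdivlMr // mulrC => E.
by have := lt_le_trans H E; rewrite ltxx.
Qed.

Lemma CP_correct S n v : CP_out dist d S n v -> is_min_dist dist S v.
Proof.
case: (hm) => d0 deq dsym dtri.
elim => [S0 n0 v0 _ h // | S0 n0 p Rr v1 v2 hns hsp S1 S2 S3 _ IH1 _ IH2].
have [x' [y' [hx' hy' hxy' hle']]] := @key _ _ _ _ hsp.
case: IH1 => [ex1 IH1]; case: IH2 => [ex2 IH2].
have v1le : v1 <= Rr / (CP_t d n0)%:R.
  apply: le_trans hle'; apply: IH1 => //; by rewrite in_setU ?hx' ?hy'.
have strad : forall x y, x \in S1 -> y \in S3 -> Rr / (CP_t d n0)%:R < dist x y.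
  move=> x y; rewrite /S3 /S1 /S2 !inE => /andP [xS hx] /andP [hy yS].
  rewrite yS /= in hy.
  have h2 : (1 + (CP_t d n0)%:R^-1) * Rr < dist p y.
    rewrite ltNge; apply/negP => h; move: hy; rewrite h andbT.
    by case: lerP.
  rewrite mulrDl mul1r in h2.
  have h3 : Rr + (CP_t d n0)%:R^-1 * Rr < Rr + dist x y.
    apply: (lt_le_trans h2); apply: (le_trans (dtri p x y)); exact: lerD hx (lexx _).
  by rewrite ltrD2l mulrC in h3.
have S0P : forall z, z \in S0 -> [\/ z \in S1, z \in S2 | z \in S3].
  move=> z zS; case: (boolP (z \in S1)) => h1; first by constructor 1.
  case: (boolP (z \in S2)) => h2; first by constructor 2.
  by constructor 3; rewrite /S3 in_setD in_setU (negbTE h1) (negbTE h2).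
have sub1 : forall z, z \in S1 :|: S2 -> z \in S0.
  by move=> z; rewrite !inE => /orP [/andP []|/andP []].
have sub2 : forall z, z \in S2 :|: S3 -> z \in S0.
  by move=> z; rewrite /S3 !inE => /orP [/andP []|/andP [] _ ->].
split.
  case: (leP v1 v2) => h.
    case: ex1 => [x [y [hx hy hxy ->]]]; exists x, y; split => //; by [apply: sub1 | apply: sub1].
  case: ex2 => [x [y [hx hy hxy ->]]]; exists x, y; split => //; by [apply: sub2 | apply: sub2].
move=> x y xS yS xy; rewrite ge_min; apply/orP.
have u1 : forall z, z \in S1 -> z \in S1 :|: S2 by move=> z hz; rewrite in_setU hz.
have u2 : forall z, z \in S2 -> z \in S1 :|: S2 by move=> z hz; rewrite in_setU hz orbT.
have w2 : forall z, z \in S2 -> z \in S2 :|: S3 by move=> z hz; rewrite in_setU hz.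
have w3 : forall z, z \in S3 -> z \in S2 :|: S3 by move=> z hz; rewrite in_setU hz orbT.
have yx : y != x by rewrite eq_sym.
case: (S0P x xS) => hx; case: (S0P y yS) => hy.
- by left; apply: IH1 => //; auto.
- by left; apply: IH1 => //; auto.
- by left; apply: (le_trans v1le); apply: ltW; apply: strad.
- by left; apply: IH1 => //; auto.
- by left; apply: IH1 => //; auto.
- by right; apply: IH2 => //; auto.
- by left; apply: (le_trans v1le); rewrite dsym; apply: ltW; apply: strad.
- by right; apply: IH2 => //; auto.
- by right; apply: IH2 => //; auto.
Qed.
End S.

Theorem corollary1 (T : finType) (R : realType) (dist : T -> T -> R) (d : R)
    (v : R) :
  is_metric dist -> (2 <= #|T|)%N -> doubling_dimension dist d ->
  CP_out dist d [set: T] #|[set: T]| v ->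
  is_min_dist dist [set: T] v.
Proof.
move=> hm hT [lam [[hcov _] hd]] hcp.
have lam0 : (0 < lam)%N.
  have : (0 < #|T|)%N by apply: leq_trans hT.
  case/card_gt0P => p _.
  have [Q [HQ1 HQ2]] := hcov p 1 ltr01.
  have : p \in ball dist [set: T] p 1.
    by rewrite inE in_setT /=; case: hm => d0 deq _ _; rewrite (proj2 (deq p p)).
  move/(subsetP HQ2)/bigcupP => [q qQ _].
  apply: leq_trans HQ1; apply/card_gt0P; by exists q.
exact: (@CP_correct T R dist hm lam hcov lam0 d hd _ _ _ hcp).
Qed.
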